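(* Let $(V,E)$ be a digraph with $V$ countably infinite, $\mu_1,\mu_2$ probability measures on $V$, and $Q$ a finitely decomposable acyclic flow on $(V,E)$ with $\operatorname{div}Q=\mu_1-\mu_2$. Then there exists a coupling $\rho$ between $\mu_1$ and $\mu_2$ such that $\rho(x,y)=0$ whenever there is no directed path from $x$ to $y$ in the digraph $(V,E(Q))$.
   Context: A flow on $(V,E)$ is a map $Q:E\to[0,+\infty)$, with $\operatorname{div}Q(x)=\sum_{y:(x,y)\in E}Q(x,y)-\sum_{y:(y,x)\in E}Q(y,x)$. $E(Q)=\{e\in E:Q(e)>0\}$; $Q$ is acyclic if $(V,E(Q))$ has no directed cycle. For a directed path $\gamma=(x_0,\dots,x_n)$, $Q_\gamma(x,y)=1$ if $(x,y)=(x_i,x_{i+1})$ for some $i$, $0$ otherwise. $Q$ is finitely decomposable if $Q=\sum_nq_nQ_{\gamma_n}$ pointwise for a countable family of finite self-avoiding directed paths $\gamma_n$ and weights $q_n\ge0$ with $\sum_nq_n<\infty$. A coupling is a probability measure on $V\times V$ with marginals $\mu_1,\mu_2$. A path of length zero from $x$ to $x$ is allowed. *)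

(* Defs.v *)
From Stdlib Require Import Reals List Relations ClassicalDescription.
Open Scope R_scope.
Set Implicit Arguments.

Section Defs.
Variable V : Type.

(* V is countably infinite: e : nat -> V is a bijection. *)
Definition enumeration (e : nat -> V) : Prop :=
  (forall v : V, exists n, e n = v) /\ (forall n m, e n = e m -> n = m).

(* Sum over V of a family g : V -> R along the enumeration e.
   All families summed below are nonnegative, so the value is independent
   of the chosen enumeration. *)
Definition sumV (e : nat -> V) (g : V -> R) (s : R) : Prop :=
  infinite_sum (fun n => g (e n)) s.

Definition is_prob (e : nat -> V) (mu : V -> R) : Prop :=
  (forall x, 0 <= mu x) /\ sumV e mu 1.

Definition is_flow (E : V -> V -> Prop) (Q : V -> V -> R) : Prop :=
  (forall x y, 0 <= Q x y) /\ (forall x y, ~ E x y -> Q x y = 0).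

Definition EQ (Q : V -> V -> R) (x y : V) : Prop := 0 < Q x y.

Definition div_eq (e : nat -> V) (Q : V -> V -> R) (mu1 mu2 : V -> R) : Prop :=
  forall x, exists out inn,
    sumV e (fun y => Q x y) out /\ sumV e (fun y => Q y x) inn /\
    out - inn = mu1 x - mu2 x.

Definition acyclic (Q : V -> V -> R) : Prop :=
  forall x, ~ clos_trans V (EQ Q) x x.

Fixpoint is_dpath (E : V -> V -> Prop) (l : list V) : Prop :=
  match l with
  | x :: ((y :: _) as t) => E x y /\ is_dpath E t
  | _ => True
  end.

Definition path_edge (l : list V) (x y : V) : Prop :=
  exists l1 l2, l = l1 ++ x :: y :: l2.

Definition indic (P : Prop) : R :=
  if excluded_middle_informative P then 1 else 0.

Definition Qpath (l : list V) (x y : V) : R := indic (path_edge l x y).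

(* Finitely decomposable: Q = sum_n q_n Q_{gamma_n} pointwise, gamma_n finite
   self-avoiding directed paths, q_n >= 0, sum q_n < oo.  A finite family is
   padded with zero weights. *)
Definition finitely_decomposable (E : V -> V -> Prop) (Q : V -> V -> R) : Prop :=
  exists (gam : nat -> list V) (q : nat -> R),
    (forall n, 0 <= q n) /\
    (exists S, infinite_sum q S) /\
    (forall n, is_dpath E (gam n) /\ NoDup (gam n)) /\
    (forall x y, infinite_sum (fun n => q n * Qpath (gam n) x y) (Q x y)).

Definition coupling (e : nat -> V) (rho : V -> V -> R) (mu1 mu2 : V -> R) : Prop :=
  (forall x y, 0 <= rho x y) /\
  (forall x, sumV e (fun y => rho x y) (mu1 x)) /\
  (forall y, sumV e (fun x => rho x y) (mu2 y)).

End Defs.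

(* Main.v *)
Require Import Defs.
From Stdlib Require Import Reals List Relations.
Open Scope R_scope.

Set Warnings "-notation-overridden,-ambiguous-paths,-notation-incompatible-prefix,-deprecated".
From Stdlib Require Import Lia ClassicalDescription.

Module LL.
Import ListNotations.

Section L.
Variable V : Type.
Definition firstp (g : list V) x := exists l, g = x :: l.
Definition lastp (g : list V) x := exists l, g = l ++ [x].

Lemma split_uniq (g : list V) x l1 r1 l3 r3 : NoDup g ->
  g = l1 ++ x :: r1 -> g = l3 ++ x :: r3 -> l1 = l3 /\ r1 = r3.
Proof.
intros ND -> E. revert l3 E ND.
induction l1 as [|a l1 IH]; intros l3 E ND; destruct l3 as [|b l3]; simpl in *.
- inversion E; auto.
- inversion E; subst. exfalso. inversion ND; subst. apply H1. apply in_or_app; simpl; auto.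
- inversion E; subst. exfalso. inversion ND; subst. apply H1. apply in_or_app; simpl; auto.
- inversion E; subst. inversion ND; subst. destruct (IH l3 H1 H3). subst; auto.
Qed.

Lemma edge_succ_unique (g : list V) x y1 y2 : NoDup g -> path_edge g x y1 -> path_edge g x y2 -> y1 = y2.
Proof.
intros ND [l1 [l2 E1]] [l3 [l4 E2]].
destruct (split_uniq _ _ _ _ _ _ ND E1 E2) as [_ H]. inversion H; auto.
Qed.

Lemma edge_pred_unique (g : list V) x y1 y2 : NoDup g -> path_edge g y1 x -> path_edge g y2 x -> y1 = y2.
Proof.
intros ND [l1 [l2 E1]] [l3 [l4 E2]].
assert (E1' : g = (l1 ++ [y1]) ++ x :: l2) by (rewrite E1, <- app_assoc; reflexivity).
assert (E2' : g = (l3 ++ [y2]) ++ x :: l4) by (rewrite E2, <- app_assoc; reflexivity).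
destruct (split_uniq _ _ _ _ _ _ ND E1' E2') as [H _].
apply app_inj_tail in H. destruct H; auto.
Qed.

Lemma out_iff (g : list V) x : (exists y, path_edge g x y) \/ lastp g x <-> In x g.
Proof.
split.
- intros [[y [l1 [l2 ->]]]|[l ->]]; apply in_or_app; simpl; auto.
- intros H. destruct (in_split x g H) as [l1 [l2 ->]].
  destruct l2 as [|y l2].
  + right. exists l1. reflexivity.
  + left. exists y, l1, l2. reflexivity.
Qed.

Lemma out_excl (g : list V) x : NoDup g -> ~ ((exists y, path_edge g x y) /\ lastp g x).
Proof.
intros ND [[y [l1 [l2 E1]]] [l3 E3]].
destruct (exists_last (l:=y :: l2)) as [l4 [z E4]]; [discriminate|].
assert (Hz : In z (y :: l2)) by (rewrite E4; apply in_or_app; simpl; auto).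
assert (E : (l1 ++ x :: l4) ++ [z] = l3 ++ [x]).
{ rewrite <- E3, E1, <- app_assoc. simpl. rewrite <- E4. reflexivity. }
apply app_inj_tail in E. destruct E as [_ ->].
rewrite E1 in ND. apply NoDup_remove_2 in ND. apply ND. apply in_or_app; auto.
Qed.

Lemma in_iff (g : list V) x : (exists y, path_edge g y x) \/ firstp g x <-> In x g.
Proof.
split.
- intros [[y [l1 [l2 ->]]]|[l ->]]; [apply in_or_app; simpl; auto| simpl; auto].
- intros H. destruct (in_split x g H) as [l1 [l2 ->]].
  destruct (rev l1) as [|y l1'] eqn:E.
  + right. exists l2. destruct l1; [reflexivity|].
    simpl in E. destruct (rev l1); discriminate.
  + left. exists y, (rev l1'), l2.
    rewrite <- (rev_involutive l1), E. simpl. rewrite <- app_assoc. reflexivity.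
Qed.

Lemma in_excl (g : list V) x : NoDup g -> ~ ((exists y, path_edge g y x) /\ firstp g x).
Proof.
intros ND [[y [l1 [l2 E1]]] [l E2]]. rewrite E2 in ND, E1.
inversion ND; subst. apply H1.
destruct l1 as [|a l1]; simpl in E1; inversion E1; subst.
- simpl; auto.
- apply in_or_app; simpl; auto.
Qed.

Lemma lastp_uniq (g : list V) x y : lastp g x -> lastp g y -> x = y.
Proof. intros [l1 E1] [l2 E2]. rewrite E1 in E2. apply app_inj_tail in E2. destruct E2; auto. Qed.

Lemma firstp_uniq (g : list V) x y : firstp g x -> firstp g y -> x = y.
Proof. intros [l1 E1] [l2 E2]. rewrite E1 in E2. inversion E2; auto. Qed.

Lemma lastp_nonnil (g : list V) : g <> nil -> exists x, lastp g x.
Proof. intros H. destruct (exists_last H) as [l [z E]]. exists z, l; auto. Qed.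

Lemma lastp_nil (g : list V) x : lastp g x -> g <> nil.
Proof. intros [l ->]. destruct l; discriminate. Qed.

Lemma firstp_hd (g : list V) x d : firstp g x -> hd d g = x.
Proof. intros [l ->]; reflexivity. Qed.

Lemma firstp_nonnil (g : list V) d : g <> nil -> firstp g (hd d g).
Proof. destruct g as [|a l]; [tauto|]. intros _. exists l; reflexivity. Qed.

Lemma path_reach (P : V -> V -> Prop) (l : list V) s y :
  (forall a b, path_edge (s :: l) a b -> P a b) -> lastp (s :: l) y ->
  Relation_Operators.clos_refl_trans V P s y.
Proof.
revert s. induction l as [|b l IH]; intros s HP Hl.
- destruct Hl as [l0 E]. destruct l0 as [|c l0]; simpl in E; inversion E; subst.
  + apply Relation_Operators.rt_refl.
  + destruct l0; discriminate.
- apply Relation_Operators.rt_trans with b.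
  + apply Relation_Operators.rt_step. apply HP. exists nil, l. reflexivity.
  + apply IH.
    * intros a c [l1 [l2 E]]. apply HP. exists (s :: l1), l2. rewrite E. reflexivity.
    * destruct Hl as [l0 E]. destruct l0 as [|c l0]; simpl in E; inversion E; subst.
      exists l0; auto.
Qed.
End L.
Arguments firstp {V}. Arguments lastp {V}.
End LL.
Import LL.

From mathcomp Require Import all_boot all_order all_algebra.
From mathcomp Require Import all_classical all_reals all_analysis.
From mathcomp Require Import Rstruct Rstruct_topology.
From mathcomp Require Import lra ring.
Import Order.TTheory GRing.Theory Num.Theory.
Import numFieldNormedType.Exports.
Local Open Scope ring_scope.
Local Open Scope ereal_scope.

Lemma es_term_le (f : nat -> \bar R) j : (forall k, 0 <= f k) -> f j <= \sum_(k <oo) f k.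
Proof.
move=> f0; rewrite (@nneseriesD1 _ f j xpredT) //; apply: leeDl.
by apply: nneseries_ge0 => k _ _; exact: f0.
Qed.

Lemma es_eq0 (f : nat -> \bar R) : (forall k, f k = 0) -> \sum_(k <oo) f k = 0.
Proof. by move=> f0; apply: eseries0 => i _ _; exact: f0. Qed.

Lemma es_neq0 (f : nat -> \bar R) : \sum_(k <oo) f k <> 0 -> exists k, f k <> 0.
Proof.
move=> H; apply: contrapT => H'; apply: H; apply: es_eq0 => k.
by apply: contrapT => Hk; apply: H'; exists k.
Qed.

Lemma es_delta (f : nat -> \bar R) j : (forall k, 0 <= f k) -> (forall k, k <> j -> f k = 0) ->
  \sum_(k <oo) f k = f j.
Proof.
move=> f0 fj; rewrite (@nneseriesD1 _ f j xpredT) // eseries0 ?adde0 // => i _ /andP[_ /eqP ij].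
exact: fj.
Qed.

Lemma es_le_bound (f : nat -> \bar R) c : (forall k, 0 <= f k) ->
  (forall N, \sum_(k < N) f k <= c) -> \sum_(k <oo) f k <= c.
Proof.
move=> f0 H; apply: lime_le; first by apply: is_cvg_nneseries => n _ _; exact: f0.
by apply: nearW => N; rewrite big_mkord.
Qed.

Lemma indic_T (P : Prop) : P -> Defs.indic P = 1%R.
Proof. by rewrite /Defs.indic; case: excluded_middle_informative. Qed.
Lemma indic_F (P : Prop) : ~ P -> Defs.indic P = 0%R.
Proof. by rewrite /Defs.indic; case: excluded_middle_informative. Qed.
Lemma indic_ge0 (P : Prop) : (0 <= Defs.indic P)%R.
Proof. by rewrite /Defs.indic; case: excluded_middle_informative => _; rewrite ?R1E ?R0E. Qed.
Lemma indic_le1 (P : Prop) : (Defs.indic P <= 1)%R.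
Proof. by rewrite /Defs.indic; case: excluded_middle_informative => _; rewrite ?R1E ?R0E. Qed.
Lemma indic_add (P Q S : Prop) : (P \/ Q <-> S) -> ~ (P /\ Q) -> (Defs.indic P + Defs.indic Q = Defs.indic S)%R.
Proof.
move=> [H1 H2] H3; rewrite /Defs.indic.
case: excluded_middle_informative => p; case: excluded_middle_informative => q;
case: excluded_middle_informative => s; rewrite ?R1E ?R0E ?addr0 ?add0r //;
  first [ by exfalso; apply: H3 | by exfalso; apply: s; apply: H1; left
        | by exfalso; apply: s; apply: H1; right | by exfalso; case: (H2 s) ].
Qed.

Section SVsec.
Variable V : Type.
Variable e : nat -> V.
Hypothesis e_surj : forall v, exists n, e n = v.
Hypothesis e_inj : forall n m, e n = e m -> n = m.

Definition SV (f : V -> \bar R) := \sum_(j <oo) f (e j).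

Lemma SV_ge0 f : (forall z, 0 <= f z) -> 0 <= SV f.
Proof. by move=> f0; apply: nneseries_ge0 => k _ _; exact: f0. Qed.

Lemma SV_delta f v : (forall z, 0 <= f z) -> (forall z, z <> v -> f z = 0) -> SV f = f v.
Proof.
move=> f0 fv; have [j ej] := e_surj v.
rewrite /SV (es_delta _ j) ?ej // => k kj; apply: fv => ekv.
by apply: kj; apply: e_inj; rewrite ej.
Qed.

Lemma SV_term_le f v : (forall z, 0 <= f z) -> f v <= SV f.
Proof. move=> f0; have [j <-] := e_surj v; exact: es_term_le. Qed.

Lemma SV_eq0 f : (forall z, f z = 0) -> SV f = 0.
Proof. by move=> f0; apply: es_eq0. Qed.

Lemma SV_neq0 f : SV f <> 0 -> exists z, f z <> 0.
Proof. by move/es_neq0 => [k Hk]; exists (e k). Qed.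

Lemma SV_swap (a : V -> nat -> \bar R) : (forall x n, 0 <= a x n) ->
  SV (fun x => \sum_(n <oo) a x n) = \sum_(n <oo) SV (fun x => a x n).
Proof. by move=> a0; rewrite /SV nneseries_interchange. Qed.

Lemma SV_Zl (c : R) f : (forall z, 0 <= f z) -> SV (fun z => c%:E * f z) = c%:E * SV f.
Proof. by move=> f0; rewrite /SV nneseriesZl. Qed.

Lemma SV_D f g : (forall z, 0 <= f z) -> (forall z, 0 <= g z) -> SV (fun z => f z + g z) = SV f + SV g.
Proof. by move=> f0 g0; rewrite /SV nneseriesD. Qed.

Lemma SV_le f g : (forall z, 0 <= f z) -> (forall z, f z <= g z) -> SV f <= SV g.
Proof. by move=> f0 fg; apply: lee_nneseries => *. Qed.

Lemma SV_uniq (P : V -> Prop) f z0 : (forall z, 0 <= f z) ->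
  (forall z1 z2, P z1 -> P z2 -> z1 = z2) -> P z0 ->
  SV (fun z => (Defs.indic (P z))%:E * f z) = f z0.
Proof.
move=> f0 Pu Pz0; rewrite (SV_delta _ z0).
- by rewrite indic_T // mul1e.
- by move=> z; apply: mule_ge0 => //; rewrite lee_fin indic_ge0.
- move=> z zz0; rewrite indic_F ?mul0e // => Pz; apply: zz0; exact: Pu.
Qed.

Lemma SV_none (P : V -> Prop) f : (forall z, ~ P z) ->
  SV (fun z => (Defs.indic (P z))%:E * f z) = 0.
Proof. by move=> nP; apply: SV_eq0 => z; rewrite indic_F ?mul0e. Qed.

Lemma SV_ind_ex (P : V -> Prop) : (forall z1 z2, P z1 -> P z2 -> z1 = z2) ->
  SV (fun z => (Defs.indic (P z))%:E) = (Defs.indic (exists z, P z))%:E.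
Proof.
move=> Pu; have [[z0 Pz0]|nP] := pselect (exists z, P z).
- rewrite indic_T; last by exists z0.
  have h := @SV_uniq P (fun _ => 1) z0 (fun _ => lee01) Pu Pz0.
  by rewrite -h; congr SV; apply: funext => z; rewrite mule1.
- rewrite indic_F //.
  have h := @SV_none P (fun _ => 1) (fun z Pz => nP (ex_intro _ z Pz)).
  rewrite (_ : SV _ = SV (fun z => (Defs.indic (P z))%:E * 1)); first exact: h.
  by congr SV; apply: funext => z; rewrite mule1.
Qed.
End SVsec.
Arguments SV {V}.
Arguments SV_ge0 {V e}. Arguments SV_delta {V e}. Arguments SV_term_le {V e}.
Arguments SV_eq0 {V e}. Arguments SV_neq0 {V e}. Arguments SV_swap {V e}.
Arguments SV_Zl {V e}. Arguments SV_D {V e}. Arguments SV_le {V e}.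
Arguments SV_uniq {V e}. Arguments SV_none {V e}. Arguments SV_ind_ex {V e}.

Lemma inf_sum_cvg (f : nat -> R) s : infinite_sum f s -> (series f @ \oo --> s)%classic.
Proof.
move=> H; apply/(@cvgrPdist_lt _ R^o nat _ _ (series f) s) => eps /RltP eps0.
have [N HN] := H eps eps0.
near=> n.
have -> : n = n.-1.+1 by rewrite prednK //; near: n; exists 1%N.
rewrite /series /= -sum_f_R0E -RabsE Rabs_minus_sym; apply/RltP; apply: HN.
apply/ssrnat.leP; rewrite -ltnS prednK //; last by near: n; exists 1%N.
near: n; exists N.+1 => //.
Unshelve. all: by end_near.
Qed.

Lemma cvg_inf_sum (f : nat -> R) s : (series f @ \oo --> s)%classic -> infinite_sum f s.
Proof.
move=> /(@cvgrPdist_lt _ R^o nat _ _ (series f) s) H eps /RltP eps0.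
have [N _ HN] := H eps eps0.
exists N => n /ssrnat.leP Nn; rewrite /R_dist sum_f_R0E Rabs_minus_sym RabsE; apply/RltP.
by apply: HN => /=; apply: (leq_trans Nn).
Qed.

Lemma bridgeA (f : nat -> R) s : (forall n, 0 <= f n)%R -> infinite_sum f s ->
  \sum_(j <oo) (f j)%:E = s%:E.
Proof.
move=> f0 /inf_sum_cvg H.
have -> : (fun n => \sum_(0 <= j < n) (f j)%:E) = EFin \o series f.
  by apply/funext => n; rewrite /= sumEFin.
rewrite EFin_lim.
- congr EFin; apply: cvg_lim => //; exact H.
- apply/cvg_ex; exists s; exact H.
Qed.

Lemma bridgeB (f : nat -> R) s : (forall n, 0 <= f n)%R ->
  \sum_(j <oo) (f j)%:E = s%:E -> infinite_sum f s.
Proof.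
move=> f0 H.
have cv : cvgn (series f) by apply: nnseries_is_cvg => //; rewrite H ltry.
move: H.
have -> : (fun n => \sum_(0 <= j < n) (f j)%:E) = EFin \o series f.
  by apply/funext => n; rewrite /= sumEFin.
rewrite EFin_lim // => -[<-]; exact: cvg_inf_sum.
Qed.

Section Main.
Variable V : Type.
Variable e : nat -> V.
Hypothesis e_surj : forall v, exists n, e n = v.
Hypothesis e_inj : forall n m, e n = e m -> n = m.
Variables (mu1 mu2 : V -> R) (q : nat -> R) (gam : nat -> list V) (Q : V -> V -> R) (Sq : R).
Hypothesis mu1_ge0 : forall x, (0 <= mu1 x)%R.
Hypothesis mu2_ge0 : forall x, (0 <= mu2 x)%R.
Hypothesis mu1_sum : SV e (fun x => (mu1 x)%:E) = 1.
Hypothesis mu2_sum : SV e (fun x => (mu2 x)%:E) = 1.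
Hypothesis q_ge0 : forall n, (0 <= q n)%R.
Hypothesis q_sum : \sum_(n <oo) (q n)%:E = Sq%:E.
Hypothesis gam_nodup : forall n, NoDup (gam n).
Hypothesis Q_dec : forall x y, \sum_(n <oo) (q n * Qpath (gam n) x y)%:E = (Q x y)%:E.
Hypothesis div : forall x, exists out inn, SV e (fun y => (Q x y)%:E) = out%:E /\
   SV e (fun y => (Q y x)%:E) = inn%:E /\ (out - inn = mu1 x - mu2 x)%R.

Lemma qi_ge0 n (P : Prop) : 0 <= (q n * Defs.indic P)%:E.
Proof. by rewrite lee_fin mulr_ge0 ?indic_ge0. Qed.

Lemma Q_ge_term (x y : V) (n : nat) : (q n * Qpath (gam n) x y <= Q x y)%R.
Proof. by rewrite -lee_fin -Q_dec; apply: (es_term_le (fun n => _)) => k; apply: qi_ge0. Qed.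

Lemma Q_ge0 (x y : V) : (0 <= Q x y)%R.
Proof. by rewrite -lee_fin -Q_dec; apply: nneseries_ge0 => k _ _; apply: qi_ge0. Qed.

Definition nu1 x := \sum_(n <oo) (q n * Defs.indic (firstp (gam n) x))%:E.
Definition nu2 x := \sum_(n <oo) (q n * Defs.indic (lastp (gam n) x))%:E.

Lemma qi_bound (P : nat -> Prop) : \sum_(n <oo) (q n * Defs.indic (P n))%:E <= Sq%:E.
Proof.
rewrite -q_sum; apply: lee_nneseries => [n _ _|n _]; first exact: qi_ge0.
by rewrite lee_fin ler_piMr ?indic_le1.
Qed.

Lemma qi_fin (P : nat -> Prop) : \sum_(n <oo) (q n * Defs.indic (P n))%:E \is a fin_num.
Proof.
rewrite ge0_fin_numE; last by apply: nneseries_ge0 => k _ _; apply: qi_ge0.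
exact: (le_lt_trans (qi_bound P) (ltry _)).
Qed.

Definition n1 x := fine (nu1 x).
Definition n2 x := fine (nu2 x).
Lemma nu1E x : nu1 x = (n1 x)%:E. Proof. by rewrite /n1 fineK //; apply: qi_fin. Qed.
Lemma nu2E x : nu2 x = (n2 x)%:E. Proof. by rewrite /n2 fineK //; apply: qi_fin. Qed.
Lemma n1_ge0 x : (0 <= n1 x)%R.
Proof. by rewrite -lee_fin -nu1E; apply: nneseries_ge0 => k _ _; apply: qi_ge0. Qed.
Lemma n2_ge0 x : (0 <= n2 x)%R.
Proof. by rewrite -lee_fin -nu2E; apply: nneseries_ge0 => k _ _; apply: qi_ge0. Qed.

Lemma out_eq x : SV e (fun y => (Q x y)%:E) =
  \sum_(n <oo) (q n * Defs.indic (exists y, path_edge (gam n) x y))%:E.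
Proof.
rewrite (_ : (fun y => (Q x y)%:E) = fun y => \sum_(n <oo) (q n * Qpath (gam n) x y)%:E); last first.
  by apply: funext => y; rewrite Q_dec.
rewrite SV_swap //; last by move=> y n; apply: qi_ge0.
apply: eq_eseriesr => n _.
rewrite (_ : (fun y => _) = fun y => (q n)%:E * (Defs.indic (path_edge (gam n) x y))%:E); last first.
  by apply: funext => y; rewrite EFinM.
rewrite SV_Zl; last by move=> y; rewrite lee_fin indic_ge0.
rewrite (SV_ind_ex e_surj e_inj) ?EFinM //.
move=> y1 y2; exact: edge_succ_unique.
Qed.

Lemma in_eq x : SV e (fun y => (Q y x)%:E) =
  \sum_(n <oo) (q n * Defs.indic (exists y, path_edge (gam n) y x))%:E.
Proof.
rewrite (_ : (fun y => (Q y x)%:E) = fun y => \sum_(n <oo) (q n * Qpath (gam n) y x)%:E); last first.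
  by apply: funext => y; rewrite Q_dec.
rewrite SV_swap //; last by move=> y n; apply: qi_ge0.
apply: eq_eseriesr => n _.
rewrite (_ : (fun y => _) = fun y => (q n)%:E * (Defs.indic (path_edge (gam n) y x))%:E); last first.
  by apply: funext => y; rewrite EFinM.
rewrite SV_Zl; last by move=> y; rewrite lee_fin indic_ge0.
rewrite (SV_ind_ex e_surj e_inj) ?EFinM //.
move=> y1 y2; exact: edge_pred_unique.
Qed.

Lemma balance x : (mu1 x + n2 x = mu2 x + n1 x)%R.
Proof.
have [out [inn [Ho [Hi Hd]]]] := div x.
have E1 : out%:E + nu2 x = \sum_(n <oo) (q n * Defs.indic (In x (gam n)))%:E.
  rewrite -Ho out_eq /nu2 -nneseriesD; [|by move=> *; apply: qi_ge0|by move=> *; apply: qi_ge0].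
  apply: eq_eseriesr => n _; rewrite -EFinD -mulrDr (@indic_add _ _ (In x (gam n))) //.
  - exact: out_iff.
  - exact: out_excl.
have E2 : inn%:E + nu1 x = \sum_(n <oo) (q n * Defs.indic (In x (gam n)))%:E.
  rewrite -Hi in_eq /nu1 -nneseriesD; [|by move=> *; apply: qi_ge0|by move=> *; apply: qi_ge0].
  apply: eq_eseriesr => n _; rewrite -EFinD -mulrDr (@indic_add _ _ (In x (gam n))) //.
  - exact: in_iff.
  - exact: in_excl.
move: E1; rewrite -E2 nu1E nu2E -!EFinD => -[] E.
lra.
Qed.

Definition lam x := (mu1 x + n2 x)%R.
Lemma lam_ge0 x : (0 <= lam x)%R.
Proof. by rewrite /lam addr_ge0 // n2_ge0. Qed.
Lemma lam_alt x : lam x = (mu2 x + n1 x)%R.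
Proof. exact: balance. Qed.

Definition s_ n := hd (e 0%N) (gam n).
Definition c n y := (q n * Defs.indic (lastp (gam n) y) / lam (s_ n))%R.
Lemma c_ge0 n y : (0 <= c n y)%R.
Proof. by rewrite /c !mulr_ge0 ?indic_ge0 ?invr_ge0 ?lam_ge0. Qed.

Fixpoint H (k : nat) (x z : V) : \bar R :=
  match k with
  | 0%N => (mu1 x * Defs.indic (x = z))%:E
  | k'.+1 => \sum_(n <oo) (c n z)%:E * H k' x (s_ n)
  end.

Lemma H_ge0 k x z : 0 <= H k x z.
Proof.
elim: k z => [|k IH] z /=; first by rewrite lee_fin mulr_ge0 ?indic_ge0.
apply: nneseries_ge0 => n _ _; apply: mule_ge0 => //; by rewrite lee_fin c_ge0.
Qed.

Definition Gk k z := SV e (fun x => H k x z).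
Lemma Gk_ge0 k z : 0 <= Gk k z.
Proof. exact: SV_ge0 _ (fun x => H_ge0 k x z). Qed.

Lemma Gk0 z : Gk 0 z = (mu1 z)%:E.
Proof.
rewrite /Gk (SV_delta e_surj e_inj _ z) /=.
- by rewrite indic_T // mulr1.
- by move=> x; exact: (H_ge0 0 x z).
- by move=> x xz /=; rewrite indic_F // mulr0.
Qed.

Lemma GkS k z : Gk k.+1 z = \sum_(n <oo) (c n z)%:E * Gk k (s_ n).
Proof.
rewrite /Gk /= SV_swap; last by move=> x n; rewrite mule_ge0 ?lee_fin ?c_ge0 ?H_ge0.
by apply: eq_eseriesr => n _; rewrite SV_Zl //; move=> x; apply: H_ge0.
Qed.

Lemma P_bound N z : \sum_(k < N) Gk k z <= (lam z)%:E.
Proof.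
elim: N z => [|N IH] z; first by rewrite big_ord0 lee_fin lam_ge0.
rewrite big_ord_recl Gk0 /=.
rewrite (eq_bigr (fun i : 'I_N => \sum_(n <oo) (c n z)%:E * Gk i (s_ n))); last first.
  by move=> i _; rewrite GkS.
rewrite -nneseries_sum; last by move=> i j _; rewrite mule_ge0 ?lee_fin ?c_ge0 ?Gk_ge0.
rewrite /lam EFinD leeD2l // -nu2E /nu2.
apply: lee_nneseries => [n _ _|n _].
  by apply: sume_ge0 => i _; rewrite mule_ge0 ?lee_fin ?c_ge0 ?Gk_ge0.
rewrite -ge0_sume_distrr; last by move=> i _; apply: Gk_ge0.
have [l0|lpos] := eqVneq (lam (s_ n)) 0%R.
  by rewrite /c l0 invr0 mulr0 mul0e lee_fin mulr_ge0 ?indic_ge0.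
apply: (le_trans (lee_wpmul2l _ (IH (s_ n)))); first by rewrite lee_fin c_ge0.
by rewrite -EFinM /c divfK.
Qed.

Definition G z := \sum_(k <oo) Gk k z.
Lemma G_bound z : G z <= (lam z)%:E.
Proof. by apply: es_le_bound => [k|N]; [apply: Gk_ge0|apply: P_bound]. Qed.

Lemma H_le k x z : H k x z <= (lam z)%:E.
Proof.
apply: (le_trans _ (G_bound z)); apply: (le_trans _ (es_term_le _ k (fun k => Gk_ge0 k z))).
exact: SV_term_le _ x (fun y => H_ge0 k y z).
Qed.

Lemma H_fin k x z : H k x z \is a fin_num.
Proof. by rewrite ge0_fin_numE ?H_ge0 //; apply: le_lt_trans (H_le k x z) (ltry _). Qed.

Definition h k x z := fine (H k x z).
Lemma HE k x z : H k x z = (h k x z)%:E.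
Proof. by rewrite /h fineK // H_fin. Qed.
Lemma h_ge0 k x z : (0 <= h k x z)%R.
Proof. by rewrite -lee_fin -HE H_ge0. Qed.
Lemma h_le k x z : (h k x z <= lam z)%R.
Proof. by rewrite -lee_fin -HE H_le. Qed.
Lemma h_lam0 k x z : lam z = 0%R -> h k x z = 0%R.
Proof. by move=> l0; apply/eqP; rewrite eq_le h_ge0 andbT -l0 h_le. Qed.


Lemma indic_iff (P1 P2 : Prop) : (P1 <-> P2) -> Defs.indic P1 = Defs.indic P2.
Proof. by move=> /propext ->. Qed.

Lemma SV_scaled (P : V -> Prop) (w : R) : (forall z1 z2, P z1 -> P z2 -> z1 = z2) -> (0 <= w)%R ->
  SV e (fun z => (Defs.indic (P z) * w)%:E) = (Defs.indic (exists z, P z) * w)%:E.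
Proof.
move=> Pu w0.
rewrite (_ : (fun z => _) = fun z => w%:E * (Defs.indic (P z))%:E); last first.
  by apply: funext => z; rewrite EFinM muleC.
rewrite SV_Zl; last by move=> z; rewrite lee_fin indic_ge0.
by rewrite (SV_ind_ex e_surj e_inj) // EFinM muleC.
Qed.

Lemma SV_uniq_real (P : V -> Prop) (f : V -> R) z0 : (forall z, 0 <= f z)%R ->
  (forall z1 z2, P z1 -> P z2 -> z1 = z2) -> P z0 ->
  SV e (fun z => (Defs.indic (P z) * f z)%:E) = (f z0)%:E.
Proof.
move=> f0 Pu Pz0.
rewrite (_ : (fun z => _) = fun z => (Defs.indic (P z))%:E * (f z)%:E); last first.
  by apply: funext => z; rewrite EFinM.
by rewrite (SV_uniq e_surj e_inj P (fun z => (f z)%:E) z0) // => z; rewrite lee_fin.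
Qed.

Lemma ex_lastp (g : list V) : (exists y, lastp g y) <-> g <> nil.
Proof. split; [by move=> [y Hy]; exact: (lastp_nil _ _ y)|exact: lastp_nonnil]. Qed.

Lemma ex_firstp (g : list V) : (exists y, firstp g y) <-> g <> nil.
Proof.
split; first by move=> [y [l ->]].
by move=> Hg; exists (hd (e 0%N) g); apply: firstp_nonnil.
Qed.

Definition w n k x := (q n / lam (s_ n) * h k x (s_ n))%R.
Lemma w_ge0 n k x : (0 <= w n k x)%R.
Proof. by rewrite /w !mulr_ge0 ?invr_ge0 ?lam_ge0 ?h_ge0. Qed.

Definition m k x := SV e (fun z => (h k x z)%:E).
Definition A k x := SV e (fun z => (h k x z * (mu2 z / lam z))%:E).

Lemma mS k x : m k.+1 x = \sum_(n <oo) (Defs.indic (gam n <> nil) * w n k x)%:E.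
Proof.
rewrite /m (_ : (fun z => _) = fun z => H k.+1 x z); last by apply: funext => z; rewrite -HE.
rewrite /= SV_swap; last by move=> z n; rewrite mule_ge0 ?lee_fin ?c_ge0 ?H_ge0.
apply: eq_eseriesr => n _.
rewrite (_ : (fun z => _) = fun z => (Defs.indic (lastp (gam n) z) * w n k x)%:E); last first.
  by apply: funext => z; rewrite HE -EFinM /c /w; congr EFin; ring.
rewrite SV_scaled ?w_ge0 //; last exact: lastp_uniq.
by rewrite (indic_iff _ _ (ex_lastp _)).
Qed.

Lemma absorb_n1 k x : SV e (fun z => (h k x z * (n1 z / lam z))%:E) =
  \sum_(n <oo) (Defs.indic (gam n <> nil) * w n k x)%:E.
Proof.
rewrite (_ : (fun z => _) = fun z => \sum_(n <oo)
   (Defs.indic (firstp (gam n) z) * (h k x z / lam z * q n))%:E); last first.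
  apply: funext => z.
  rewrite (_ : (h k x z * (n1 z / lam z))%:E = (h k x z / lam z)%:E * nu1 z); last first.
    by rewrite nu1E -EFinM; congr EFin; ring.
  rewrite /nu1 -nneseriesZl; last by move=> n _; apply: qi_ge0.
  by apply: eq_eseriesr => n _; rewrite -EFinM; congr EFin; ring.
rewrite SV_swap; last by move=> z n; rewrite lee_fin !mulr_ge0 ?indic_ge0 ?h_ge0 ?invr_ge0 ?lam_ge0.
apply: eq_eseriesr => n _.
have [g0|gn0] := pselect (gam n = nil).
  rewrite indic_F ?mul0r; last by move=> /(_ g0).
  apply: SV_eq0 => z; rewrite indic_F ?mul0r // => -[l]; rewrite g0.
  by [].
rewrite indic_T ?mul1r //.
rewrite (SV_uniq_real (fun z => firstp (gam n) z) (fun z => (h k x z / lam z * q n)%R) (s_ n)).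
- by rewrite /w; congr EFin; ring.
- by move=> z; rewrite !mulr_ge0 ?h_ge0 ?invr_ge0 ?lam_ge0.
- exact: firstp_uniq.
- by apply: firstp_nonnil.
Qed.

Lemma step k x : A k x + m k.+1 x = m k x.
Proof.
rewrite mS -absorb_n1 /A -SV_D; last first.
- by move=> z; rewrite lee_fin !mulr_ge0 ?h_ge0 ?n1_ge0 ?invr_ge0 ?lam_ge0.
- by move=> z; rewrite lee_fin !mulr_ge0 ?h_ge0 ?invr_ge0 ?lam_ge0.
rewrite /m; congr SV; apply: funext => z; rewrite -EFinD; congr EFin.
have [l0|lpos] := eqVneq (lam z) 0%R; first by rewrite h_lam0 // !mul0r addr0.
by rewrite -mulrDr -mulrDl -lam_alt divff // mulr1.
Qed.

Lemma m0 x : m 0 x = (mu1 x)%:E.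
Proof.
rewrite /m (_ : (fun z => _) = fun z => H 0 x z); last by apply: funext => z; rewrite -HE.
rewrite (SV_delta e_surj e_inj _ x) /=.
- by rewrite indic_T // mulr1.
- by move=> z; exact: (H_ge0 0 x z).
- by move=> z xz /=; rewrite indic_F ?mulr0 // => E; apply: xz.
Qed.

Lemma A_ge0 k x : 0 <= A k x.
Proof. by apply: SV_ge0 => z; rewrite lee_fin !mulr_ge0 ?h_ge0 ?invr_ge0 ?lam_ge0. Qed.
Lemma m_ge0 k x : 0 <= m k x.
Proof. by apply: SV_ge0 => z; rewrite lee_fin h_ge0. Qed.

Lemma sumA N x : \sum_(k < N) A k x + m N x = (mu1 x)%:E.
Proof.
elim: N => [|N IH]; first by rewrite big_ord0 add0e m0.
by rewrite big_ord_recr /= -addeA step.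
Qed.


Lemma SV_nu2 : SV e nu2 <= Sq%:E.
Proof.
rewrite /nu2 SV_swap; last by move=> z n; apply: qi_ge0.
apply: le_trans _ (qi_bound (fun n => exists z, lastp (gam n) z)).
apply: lee_nneseries => [n _ _|n _]; first by apply: SV_ge0 => z; apply: qi_ge0.
rewrite (_ : SV e _ = SV e (fun z => (Defs.indic (lastp (gam n) z) * q n)%:E)); last first.
  by congr SV; apply: funext => z; rewrite mulrC.
rewrite SV_scaled ?q_ge0 //; last exact: lastp_uniq.
by rewrite mulrC.
Qed.

Lemma SV_lam : SV e (fun z => (lam z)%:E) <= 1 + Sq%:E.
Proof.
rewrite (_ : (fun z => _) = fun z => (mu1 z)%:E + nu2 z); last first.
  by apply: funext => z; rewrite nu2E /lam EFinD.
rewrite SV_D; last by move=> z; apply: nneseries_ge0 => k _ _; apply: qi_ge0.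
  by rewrite mu1_sum leeD2l // SV_nu2.
by move=> z; rewrite lee_fin.
Qed.

Lemma m_sum_bound x : \sum_(k <oo) m k x <= 1 + Sq%:E.
Proof.
have mE k : m k x = SV e (fun z => H k x z).
  by rewrite /m; congr SV; apply: funext => z; rewrite HE.
rewrite (eq_eseriesr (fun k _ => mE k)).
rewrite -SV_swap; last by move=> *; apply: H_ge0.
clear mE.
apply: le_trans _ SV_lam; apply: SV_le => [z|z].
  by apply: nneseries_ge0 => *; apply: H_ge0.
apply: le_trans _ (G_bound z); apply: lee_nneseries => [k _ _|k _]; first exact: H_ge0.
exact: SV_term_le _ x (fun y => H_ge0 k y z).
Qed.

Lemma A_sum x : \sum_(k <oo) A k x = (mu1 x)%:E.
Proof.
have Ale : \sum_(k <oo) A k x <= (mu1 x)%:E.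
  apply: es_le_bound => [k|N]; first exact: A_ge0.
  by rewrite -(sumA N x) leeDl // m_ge0.
apply/eqP; rewrite eq_le Ale /=.
have Afin : \sum_(k <oo) A k x \is a fin_num.
  rewrite ge0_fin_numE; first exact: le_lt_trans Ale (ltry _).
  by apply: nneseries_ge0 => *; apply: A_ge0.
have mfin : \sum_(k <oo) m k x < +oo.
  by apply: le_lt_trans (m_sum_bound x) _; rewrite -EFinD ltry.
have cT := nneseries_tail_cvg mfin (fun k _ => m_ge0 k x).
rewrite -[X in _ <= X]adde0 -leeBlDl //.
suff : (mu1 x)%:E - \sum_(k <oo) A k x <= limn (fun N => \sum_(N <= k <oo) m k x).
  by rewrite (cvg_lim _ cT).
apply: lime_ge; first by apply/cvg_ex; exists 0; exact cT.
apply: nearW => N; rewrite leeBlDl // -(sumA N x).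
apply: leeD.
  by rewrite -(big_mkord xpredT (fun k => A k x)); apply: nneseries_lim_ge => *; apply: A_ge0.
have := @nneseries_lim_ge _ (fun k => m k x) xpredT N N.+1 (fun k _ _ => m_ge0 k x).
by rewrite big_nat1.
Qed.

Definition rho2 x z := \sum_(k <oo) (h k x z * (mu2 z / lam z))%:E.
Lemma rho2_ge0 x z : 0 <= rho2 x z.
Proof. by apply: nneseries_ge0 => *; rewrite lee_fin !mulr_ge0 ?h_ge0 ?invr_ge0 ?lam_ge0. Qed.

Lemma row x : SV e (fun z => rho2 x z) = (mu1 x)%:E.
Proof.
rewrite /rho2 SV_swap; last by move=> *; rewrite lee_fin !mulr_ge0 ?h_ge0 ?invr_ge0 ?lam_ge0.
exact: A_sum.
Qed.

Lemma col_le z : SV e (fun x => rho2 x z) <= (mu2 z)%:E.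
Proof.
rewrite /rho2 SV_swap; last by move=> *; rewrite lee_fin !mulr_ge0 ?h_ge0 ?invr_ge0 ?lam_ge0.
have gE k : SV e (fun x => (h k x z * (mu2 z / lam z))%:E) = (mu2 z / lam z)%:E * Gk k z.
  rewrite /Gk -SV_Zl; last by move=> *; apply: H_ge0.
  by congr SV; apply: funext => x; rewrite HE -EFinM mulrC.
rewrite (eq_eseriesr (fun k _ => gE k)).
rewrite nneseriesZl; last by move=> *; apply: Gk_ge0.
have [l0|lpos] := eqVneq (lam z) 0%R; first by rewrite l0 invr0 mulr0 mul0e lee_fin.
apply: le_trans (lee_wpmul2l _ (G_bound z)) _.
  by rewrite lee_fin mulr_ge0 ?invr_ge0 ?lam_ge0.
by rewrite -EFinM divfK.
Qed.

Lemma SV_eq_of_le (a : V -> \bar R) (b : V -> R) : (forall z, 0 <= a z) ->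
  (forall z, a z <= (b z)%:E) -> SV e a = SV e (fun z => (b z)%:E) ->
  SV e (fun z => (b z)%:E) \is a fin_num -> forall z, a z = (b z)%:E.
Proof.
move=> a0 ab Eab bfin.
have afin z : a z \is a fin_num.
  by rewrite ge0_fin_numE ?a0 //; apply: le_lt_trans (ab z) (ltry _).
pose d z := (b z)%:E - a z.
have d0 z : 0 <= d z by rewrite /d suber_ge0.
have bE : (fun z => (b z)%:E) = fun z => a z + d z.
  by apply: funext => z; rewrite /d addeC subeK.
have Safin : SV e a \is a fin_num by rewrite Eab.
have Sd : SV e d = 0.
  move: Eab; rewrite bE SV_D // => E.
  have H := addeK (SV e d) Safin.
  by rewrite [SV e d + _]addeC -E subee // in H.
move=> z; have : d z <= 0 by rewrite -Sd; exact: SV_term_le.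
move=> dz; have dz0 : d z = 0 by apply/eqP; rewrite eq_le dz d0.
by move: (congr1 (fun f => f z) bE) => /= ->; rewrite dz0 adde0.
Qed.

Lemma col z : SV e (fun x => rho2 x z) = (mu2 z)%:E.
Proof.
apply: (SV_eq_of_le (fun z => SV e (fun x => rho2 x z)) mu2) => //.
- by move=> y; apply: SV_ge0 => x; apply: rho2_ge0.
- exact: col_le.
- rewrite mu2_sum /SV nneseries_interchange; last by move=> *; apply: rho2_ge0.
  rewrite -/(SV e (fun x => SV e (fun z => rho2 x z))).
  rewrite (_ : (fun x => _) = fun x => (mu1 x)%:E); last by apply: funext => x; rewrite row.
  by rewrite mu1_sum.
- by rewrite mu2_sum.
Qed.


Lemma H_reach k x z : H k x z <> 0 -> clos_refl_trans V (EQ Q) x z.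
Proof.
elim: k z => [|k IH] z /=.
  move=> Hn; have [->|xz] := pselect (x = z); first exact: rt_refl.
  by exfalso; apply: Hn; rewrite indic_F ?mulr0.
move/es_neq0 => [n Hn].
have Hc : c n z <> 0%R by move=> c0; apply: Hn; rewrite c0 mul0e.
have Hk : H k x (s_ n) <> 0 by move=> h0; apply: Hn; rewrite h0 mule0.
have Hl : lastp (gam n) z.
  by apply: contrapT => nl; apply: Hc; rewrite /c indic_F ?mulr0 ?mul0r.
have qn : q n <> 0%R by move=> q0; apply: Hc; rewrite /c q0 !mul0r.
apply: rt_trans (IH _ Hk) _.
have gn := lastp_nil _ _ _ Hl.
move: Hl; rewrite /s_; case Eg: (gam n) => [|a l] //= Hl.
apply: (path_reach _ _ l a z) => // u v Euv.
rewrite /EQ; apply/RltP.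
have := Q_ge_term u v n; rewrite /Qpath Eg indic_T // mulr1 => Hq.
apply: lt_le_trans Hq; rewrite lt_neqAle q_ge0 andbT; apply/eqP => q0; by apply: qn; rewrite -q0.
Qed.

Lemma rho2_reach x z : rho2 x z <> 0 -> clos_refl_trans V (EQ Q) x z.
Proof.
move/es_neq0 => [k Hk]; apply: (H_reach k); rewrite HE => h0; apply: Hk.
by move: h0 => [->]; rewrite mul0r.
Qed.

Lemma rho2_fin x z : rho2 x z \is a fin_num.
Proof.
rewrite ge0_fin_numE ?rho2_ge0 //; apply: le_lt_trans (ltry (mu2 z)).
by rewrite -col; exact: SV_term_le _ x (fun y => rho2_ge0 y z).
Qed.

Lemma final : exists rho : V -> V -> R,
    coupling e rho mu1 mu2 /\
    (forall x y, ~ clos_refl_trans V (EQ Q) x y -> rho x y = 0%R).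
Proof.
exists (fun x y => fine (rho2 x y)); split; [split; [|split]|].
- by move=> x y; apply/RleP; apply: fine_ge0; apply: rho2_ge0.
- move=> x; apply: bridgeB; first by move=> n; apply: fine_ge0; apply: rho2_ge0.
  rewrite -row /SV; apply: eq_eseriesr => n _; by rewrite fineK // rho2_fin.
- move=> y; apply: bridgeB; first by move=> n; apply: fine_ge0; apply: rho2_ge0.
  rewrite -col /SV; apply: eq_eseriesr => n _; by rewrite fineK // rho2_fin.
- move=> x y nr; have [->//|r0] := pselect (rho2 x y = 0).
  by exfalso; apply: nr; apply: rho2_reach.
Qed.

End Main.

Open Scope R_scope.

Theorem theorem3p7 (V : Type) (e : nat -> V) (E : V -> V -> Prop)
  (mu1 mu2 : V -> R) (Q : V -> V -> R) :
  enumeration e ->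
  is_prob e mu1 -> is_prob e mu2 ->
  is_flow E Q -> finitely_decomposable E Q -> acyclic Q ->
  div_eq e Q mu1 mu2 ->
  exists rho : V -> V -> R,
    coupling e rho mu1 mu2 /\
    (forall x y, ~ clos_refl_trans V (EQ Q) x y -> rho x y = 0).
Proof.
move=> [es ei] [m1g m1s] [m2g m2s] [Qg _] [gam [q [qg [[Sq qs] [gd Qd]]]]] _ dv.
apply: (@final V e es ei mu1 mu2 q gam Q Sq).
- by move=> x; apply/RleP; exact: m1g.
- by move=> x; apply/RleP; exact: m2g.
- by rewrite /SV (bridgeA _ _ _ m1s) // => n; apply/RleP; exact: m1g.
- by rewrite /SV (bridgeA _ _ _ m2s) // => n; apply/RleP; exact: m2g.
- by move=> n; apply/RleP; exact: qg.
- by rewrite (bridgeA _ _ _ qs) // => n; apply/RleP; exact: qg.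
- by move=> n; case: (gd n).
- move=> x y; rewrite (bridgeA _ _ _ (Qd x y)) // => n.
  by rewrite mulr_ge0 ?indic_ge0 //; apply/RleP; exact: qg.
- move=> x; have [out [inn [H1 [H2 H3]]]] := dv x; exists out, inn.
  split; [|split; [|exact H3]].
  + by rewrite /SV (bridgeA _ _ _ H1) // => n; apply/RleP; exact: Qg.
  + by rewrite /SV (bridgeA _ _ _ H2) // => n; apply/RleP; exact: Qg.
Qed.
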